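(* Let $M,N\in su(1,1)$ be linearly independent and suppose that the set $\{u\in\mathbb{R}\mid \langle M+uN,\,M^{\dagger}+uN^{\dagger}\rangle<0\}$ is nonempty. Then $M$, $N$ and $[M,N]=MN-NM$ form a basis of $su(1,1)$ (as a real vector space).
   Context: $su(1,1)$ denotes the three-dimensional real Lie algebra of $2\times 2$ complex matrices spanned over $\mathbb{R}$ by $K_x=\frac12\begin{pmatrix}0&-i\\ i&0\end{pmatrix}$, $K_y=\frac12\begin{pmatrix}0&-1\\-1&0\end{pmatrix}$, $K_z=\frac12\begin{pmatrix}-i&0\\0&i\end{pmatrix}$. For matrices $M,N$ the inner product is $\langle M,N\rangle=2\,\mathrm{Tr}(MN^{\dagger})$, where $N^{\dagger}$ is the conjugate transpose of $N$. *)

(* Defs.v *)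
From HB Require Import structures.
From mathcomp Require Import all_boot all_order all_algebra.
From mathcomp Require Import complex.
Set Implicit Arguments. Unset Strict Implicit. Unset Printing Implicit Defensive.
Import Order.TTheory GRing.Theory Num.Theory.
Local Open Scope ring_scope.

Section Defs.
Variable R : rcfType.
Local Notation C := R[i].

Definition mx2 (a b c d : C) : 'M[C]_2 :=
  \matrix_(i < 2, j < 2)
    (if (i : nat) == 0%N then (if (j : nat) == 0%N then a else b)
     else (if (j : nat) == 0%N then c else d)).

Definition iC : C := Complex 0 1.
Definition half : C := (2%:R)^-1.

Definition Kx : 'M[C]_2 := half *: mx2 0 (- iC) iC 0.
Definition Ky : 'M[C]_2 := half *: mx2 0 (-1) (-1) 0.
Definition Kz : 'M[C]_2 := half *: mx2 (- iC) 0 0 iC.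

Definition rsc (r : R) (A : 'M[C]_2) : 'M[C]_2 := (real_complex R r) *: A.

Definition su11 (A : 'M[C]_2) : Prop :=
  exists a b c : R, A = rsc a Kx + rsc b Ky + rsc c Kz.

Definition adj (A : 'M[C]_2) : 'M[C]_2 := map_mx (@conjc R) A^T.

Definition inner (A B : 'M[C]_2) : C := 2%:R * \tr (A *m adj B).

Definition lie_bracket (A B : 'M[C]_2) : 'M[C]_2 := A *m B - B *m A.

Definition rlin_indep2 (A B : 'M[C]_2) : Prop :=
  forall a b : R, rsc a A + rsc b B = 0 -> a = 0 /\ b = 0.

Definition rlin_indep3 (A B D : 'M[C]_2) : Prop :=
  forall a b c : R, rsc a A + rsc b B + rsc c D = 0 -> [/\ a = 0, b = 0 & c = 0].

Definition su11_basis (A B D : 'M[C]_2) : Prop :=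
  [/\ su11 A, su11 B, su11 D, rlin_indep3 A B D &
      forall X, su11 X -> exists a b c : R, X = rsc a A + rsc b B + rsc c D].
End Defs.

(* Main.v *)
Require Import Defs.
From HB Require Import structures.
From mathcomp Require Import all_boot all_order all_algebra.
From mathcomp Require Import complex ring lra.
Import Order.TTheory GRing.Theory Num.Theory.
Set Implicit Arguments. Unset Strict Implicit.
Local Open Scope ring_scope.
Section S.
Variable R : rcfType.
Local Notation C := R[i].
Definition V (a b c : R) : 'M[C]_2 :=
  mx2 (Complex 0 (-(c/2))) (Complex (-(b/2)) (-(a/2))) (Complex (-(b/2)) (a/2)) (Complex 0 (c/2)).
Lemma halfE : Defs.half R = Complex (2^-1) 0.
Proof. rewrite /Defs.half. rewrite -(rmorph_nat (real_complex R)) -fmorphV. by []. Qed.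

Ltac fin := rewrite /real_complex_def; simpc;
  apply/eqP; rewrite eq_complex /=; apply/andP; split; apply/eqP; field; by rewrite ?pnatr_eq0.

Lemma VE a b c : rsc a (Kx R) + rsc b (Ky R) + rsc c (Kz R) = V a b c.
Proof.
apply/matrixP => i j; rewrite !mxE /= halfE /iC.
case: i => [[|[|i]] Hi] //=; case: j => [[|[|j]] Hj] //=; fin.
Qed.
Lemma V_add a b c a' b' c' : V a b c + V a' b' c' = V (a+a') (b+b') (c+c').
Proof.
apply/matrixP => i j; rewrite !mxE /=.
case: i => [[|[|i]] Hi] //=; case: j => [[|[|j]] Hj] //=; fin.
Qed.
Lemma V_sc r a b c : rsc r (V a b c) = V (r*a) (r*b) (r*c).
Proof.
apply/matrixP => i j; rewrite !mxE /=.
case: i => [[|[|i]] Hi] //=; case: j => [[|[|j]] Hj] //=; fin.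
Qed.
Lemma V_adj a b c : adj (V a b c) = V a b (-c).
Proof.
apply/matrixP => i j; rewrite !mxE /=.
case: i => [[|[|i]] Hi] //=; case: j => [[|[|j]] Hj] //=; fin.
Qed.
Lemma V0 : V 0 0 0 = 0.
Proof.
apply/matrixP => i j; rewrite !mxE /=.
case: i => [[|[|i]] Hi] //=; case: j => [[|[|j]] Hj] //=; fin.
Qed.
Lemma V_br a1 b1 c1 a2 b2 c2 : lie_bracket (V a1 b1 c1) (V a2 b2 c2) =
  V (b1*c2 - c1*b2) (c1*a2 - a1*c2) (b1*a2 - a1*b2).
Proof.
apply/matrixP => i j; rewrite !mxE /= !big_ord_recr !big_ord0 /= !mxE /=.
case: i => [[|[|i]] Hi] //=; case: j => [[|[|j]] Hj] //=; fin. Qed.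
Lemma V_inner a b c : inner (V a b c) (V a b (-c)) = real_complex R (a^+2 + b^+2 - c^+2).
Proof.
rewrite /inner V_adj opprK /mxtrace !big_ord_recr !big_ord0 /= !mxE /= !big_ord_recr !big_ord0 /= !mxE /=.
rewrite -(rmorph_nat (real_complex R)). fin.
Qed.
Lemma V_inj a b c a' b' c' : V a b c = V a' b' c' -> [/\ a = a', b = b' & c = c'].
Proof.
move=> E.
have h0 := congr1 (fun M : 'M[C]_2 => M ord0 ord0) E.
have h1 := congr1 (fun M : 'M[C]_2 => M ord0 (lift ord0 ord0)) E.
rewrite /= !mxE /= in h0 h1.
case: h0 => h0; case: h1 => h1 h2. split; lra.
Qed.
Lemma inner_comb a1 b1 c1 a2 b2 c2 u :
  inner (V a1 b1 c1 + rsc u (V a2 b2 c2)) (adj (V a1 b1 c1) + rsc u (adj (V a2 b2 c2)))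
  = real_complex R ((a1 + u*a2)^+2 + (b1 + u*b2)^+2 - (c1 + u*c2)^+2).
Proof.
rewrite !V_adj !V_sc !V_add.
have -> : - c1 + u * - c2 = - (c1 + u*c2) by ring.
by rewrite V_inner.
Qed.

Lemma Dpos (a1 b1 c1 a2 b2 c2 u : R) :
  (forall x y, x*a1+y*a2=0 -> x*b1+y*b2=0 -> x*c1+y*c2=0 -> x=0/\y=0) ->
  (a1 + u*a2)^+2 + (b1 + u*b2)^+2 - (c1 + u*c2)^+2 < 0 ->
  0 < (b1*c2 - c1*b2)^+2 + (c1*a2 - a1*c2)^+2 - (b1*a2 - a1*b2)^+2.
Proof.
move=> Hc Hq.
set t1 : R := a1 + u*a2 in Hq *; set t2 : R := b1 + u*b2 in Hq *; set t3 : R := c1 + u*c2 in Hq *.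
have E1 : b1*c2 - c1*b2 = t2*c2 - t3*b2 by rewrite /t2 /t3; ring.
have E2 : c1*a2 - a1*c2 = t3*a2 - t1*c2 by rewrite /t1 /t3; ring.
have E3 : b1*a2 - a1*b2 = -(t1*b2 - t2*a2) by rewrite /t1 /t2; ring.
rewrite E1 E2 E3.
set n1 : R := t2*c2 - t3*b2; set n2 : R := t3*a2 - t1*c2; set n3 : R := t1*b2 - t2*a2.
have dot : n1*t1 + n2*t2 + n3*t3 = 0 by rewrite /n1 /n2 /n3; ring.
have t3ne : t3 != 0.
  apply/eqP=> h; move: Hq; rewrite h; nra.
have [n12|n12] := eqVneq (n1^+2 + n2^+2) 0.
  have h1 : n1 = 0 by nra.
  have h2 : n2 = 0 by nra.
  have h3 : n3 = 0.
    move: dot; rewrite h1 h2 mul0r add0r mul0r add0r => /eqP; rewrite mulf_eq0 (negbTE t3ne) orbF => /eqP //.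
  have [c0 hy] : c2 = 0 /\ u*c2 - t3 = 0.
    apply: Hc.
    - have : c2 * t1 - t3 * a2 = - n2 by rewrite /n2; ring.
      rewrite h2 oppr0 /t1 => e; rewrite -e; ring.
    - have : c2 * t2 - t3 * b2 = n1 by rewrite /n1; ring.
      rewrite h1 /t2 => e; rewrite -e; ring.
    - rewrite /t3; ring.
  by move: hy t3ne; rewrite c0 mulr0 sub0r => /eqP; rewrite oppr_eq0 => ->.
have npos : 0 < n1^+2 + n2^+2.
  rewrite lt_def n12 /=; nra.
have cs : (n1*t1 + n2*t2)^+2 <= (n1^+2 + n2^+2) * (t1^+2 + t2^+2).
  have : 0 <= (n1*t2 - n2*t1)^+2 by apply: sqr_ge0.
  nra.
have e : n3*t3 = -(n1*t1 + n2*t2) by move: dot; lra.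
have st : t1^+2 + t2^+2 < t3^+2 by lra.
have k : (n3*t3)^+2 < (n1^+2 + n2^+2) * t3^+2.
  rewrite e sqrrN. apply: (le_lt_trans cs). by rewrite ltr_pM2l.
have t3p : 0 < t3^+2 by rewrite lt_def sqrf_eq0 t3ne sqr_ge0.
have : (n3^+2) * t3^+2 < (n1^+2 + n2^+2) * t3^+2 by rewrite -exprMn.
rewrite ltr_pM2r //; lra.
Qed.
End S.

Theorem lemma3p2 (R : rcfType) (M N : 'M[R[i]]_2) :
  su11 M -> su11 N -> rlin_indep2 M N ->
  (exists u : R, inner (M + rsc u N) (adj M + rsc u (adj N)) < 0) ->
  su11_basis M N (lie_bracket M N).
Proof.
move=> [a1 [b1 [c1 ->]]] [a2 [b2 [c2 ->]]] Hind [u Hu].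
rewrite !VE in Hind Hu *.
rewrite inner_comb in Hu.
move: Hu; rewrite ltcE /= => /andP[_ Hu].
have Hc : forall x y, x*a1+y*a2=0 -> x*b1+y*b2=0 -> x*c1+y*c2=0 -> x=0/\y=0.
  move=> x y e1 e2 e3; apply: Hind; by rewrite !V_sc V_add e1 e2 e3 V0.
have Dp := Dpos Hc Hu.
set D := _ - _ in Dp.
have Dn : D != 0 by rewrite gt_eqF.
rewrite V_br.
split.
- by exists a1, b1, c1; rewrite VE.
- by exists a2, b2, c2; rewrite VE.
- by eexists _, _, _; rewrite VE.
- move=> x y z; rewrite !V_sc !V_add -V0 => /V_inj [e1 e2 e3].
  have hz : z * D = (b1*c2 - c1*b2) * (x * a1 + y * a2 + z * (b1 * c2 - c1 * b2))
     + (c1*a2 - a1*c2) * (x * b1 + y * b2 + z * (c1 * a2 - a1 * c2))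
     - (b1*a2 - a1*b2) * (x * c1 + y * c2 + z * (b1 * a2 - a1 * b2)) by rewrite /D; ring.
  rewrite e1 e2 e3 !mulr0 subr0 addr0 in hz.
  have z0 : z = 0 by move/eqP: hz; rewrite mulf_eq0 (negbTE Dn) orbF => /eqP.
  rewrite z0 !mul0r !addr0 in e1 e2 e3.
  by have [-> ->] := Hc x y e1 e2 e3.
- move=> X [p [q [r ->]]]; rewrite VE.
  pose det3 (x1 x2 x3 y1 y2 y3 z1 z2 z3 : R) :=
    x1 * (y2*z3 - y3*z2) - x2 * (y1*z3 - y3*z1) + x3 * (y1*z2 - y2*z1).
  set w1 := b1*c2 - c1*b2; set w2 := c1*a2 - a1*c2; set w3 := b1*a2 - a1*b2.
  exists (det3 p a2 w1 q b2 w2 r c2 w3 / D), (det3 a1 p w1 b1 q w2 c1 r w3 / D),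
    (det3 a1 a2 p b1 b2 q c1 c2 r / D).
  rewrite !V_sc !V_add; congr V; rewrite /det3 /D /w1 /w2 /w3; field; exact: Dn.
Qed.
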